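(* Let $q$ be an odd prime power, $g\ge1$, $X,T$ positive integers, and let $\mathcal{Y}$ be the hyperelliptic curve over $\mathbb{F}_q$ with affine equation $y^2=f(x)$, $f(x)=x^{2g+1}+a_{2g}x^{2g}+\dots+a_0\in\mathbb{F}_q[x]$, of genus $g$. Let $J^{\mathcal{Y}}_{\max}$ be the largest integer $J$ for which there exist pairwise distinct $\lambda_1,\dots,\lambda_J\in\mathbb{F}_q$ with $f(\lambda_j)\ne0$ such that, with $h=\prod_{j=1}^J(x-\lambda_j)$, $\mathcal{Y}$ has at least $2J+X+T+6g+2$ affine $\mathbb{F}_q$-rational points $P$ with $y(P)\ne0$, $h(P)\ne0$. Then $$J^{\mathcal{Y}}_{\max}\le\left\lfloor\frac{2q-(X+T+6g+2)}{4}\right\rfloor,$$ and in particular $$\mathcal{R}^{\mathcal{Y}}_{\max}:=\frac{2J^{\mathcal{Y}}_{\max}-g}{2J^{\mathcal{Y}}_{\max}+X+T+5g+2}\le\frac{2q-(X+T+8g+2)}{2q+X+T+4g+2}.$$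
   Context: $\mathcal{R}^{\mathcal{Y}}_{\max}$ is the maximal rate $L/N$ (with $L=2J-g$, $N=L+X+T+6g+2$) of the known $X$-secure $T$-private PIR construction from hyperelliptic curves. *)

(* Defs.v *)
From HB Require Import structures.
From mathcomp Require Import all_boot all_order all_algebra.
From mathcomp Require Import all_field.
Set Implicit Arguments. Unset Strict Implicit. Unset Printing Implicit Defensive.
Import Order.TTheory GRing.Theory Num.Theory.
Local Open Scope ring_scope.

(* The hyperelliptic curve y^2 = f(x) of genus g over the (odd characteristic)
   finite field F: f is monic of degree 2g+1 and squarefree (separable), which
   in odd characteristic is exactly the condition for the curve to have genus g. *)
Definition hyperelliptic_poly (F : finFieldType) (g : nat) (f : {poly F}) : Prop :=
  [/\ f \is monic, size f = (2 * g + 2)%N & separable_poly f].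

Definition hpoly (F : finFieldType) (J : nat) (lam : 'I_J -> F) : {poly F} :=
  \prod_(j < J) ('X - (lam j)%:P).

Definition good_points (F : finFieldType) (f h : {poly F}) : {set F * F} :=
  [set P : F * F | [&& P.2 ^+ 2 == f.[P.1], P.2 != 0 & h.[P.1] != 0]].

Definition admissible (F : finFieldType) (f : {poly F}) (g X T J : nat) : Prop :=
  exists lam : 'I_J -> F,
    [/\ injective lam, (forall j, f.[lam j] != 0) &
        (2 * J + X + T + 6 * g + 2 <= #|good_points f (hpoly lam)|)%N].

Definition is_Jmax (F : finFieldType) (f : {poly F}) (g X T Jm : nat) : Prop :=
  admissible f g X T Jm /\ (forall J, admissible f g X T J -> (J <= Jm)%N).

Definition rate (J g X T : nat) : rat :=
  ((2 * J)%:R - g%:R) / ((2 * J)%:R - g%:R + (X + T + 6 * g + 2)%:R).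

(* Main.v *)
Require Import Defs.
From HB Require Import structures.
From mathcomp Require Import all_boot all_order all_algebra.
From mathcomp Require Import all_field.
From mathcomp Require Import ring lra zify.
Import Order.TTheory GRing.Theory Num.Theory.
Local Open Scope ring_scope.

Lemma arith (q J g X T : nat) : (4 * J + (X + T + 6 * g + 2) <= 2 * q)%N ->
  ((2 * J)%:R - g%:R) / ((2 * J)%:R - g%:R + (X + T + 6 * g + 2)%:R) <=
    ((2 * q)%:R - (X + T + 8 * g + 2)%:R) / ((2 * q + X + T + 4 * g + 2)%:R : rat).
Proof.
move=> H.
have H' : (4 * J + (X + T + 6 * g + 2))%N%:R <= (2 * q)%:R :> rat by rewrite ler_nat.
rewrite !natrD in H'; rewrite !natrD.
have g0 : 0 <= g%:R :> rat by [].
have X0 : 0 <= X%:R :> rat by [].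
have T0 : 0 <= T%:R :> rat by [].
have J0 : 0 <= J%:R :> rat by [].
have Dp : 0 < 2%:R * q%:R + X%:R + T%:R + 4%:R * g%:R + 2%:R :> rat by lra.
have Bp : 0 < 2%:R * J%:R - g%:R + (X%:R + T%:R + 6%:R * g%:R + 2%:R) :> rat by lra.
rewrite ler_pdivrMr; last lra.
rewrite mulrAC ler_pdivlMr; last lra.
nra.
Qed.

Lemma hroot (F : finFieldType) (J : nat) (lam : 'I_J -> F) j : (hpoly lam).[lam j] = 0.
Proof. by rewrite /hpoly (bigD1 j) //= hornerM hornerXsubC subrr mul0r. Qed.

Lemma count_good (F : finFieldType) (f : {poly F}) (J : nat) (lam : 'I_J -> F) :
  injective lam -> (#|good_points f (hpoly lam)| <= 2 * (#|F| - J))%N.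
Proof.
move=> linj.
set S := [set x : F | (hpoly lam).[x] != 0].
have hS : (#|S| + J <= #|F|)%N.
  have sub : lam @: setT \subset ~: S.
    by apply/subsetP => _ /imsetP [j _ ->]; rewrite !inE negbK hroot.
  rewrite -(cardsC S) leq_add2l.
  by move: (subset_leq_card sub); rewrite card_imset // cardsT card_ord.
pose r x := odflt 0 [pick y | y ^+ 2 == f.[x]].
have hr : forall x y : F, y ^+ 2 == f.[x] -> (y == r x) || (y == - r x).
  move=> x y hy; rewrite -eqf_sqr (eqP hy) /r.
  case: pickP => [z hz|none] /=; first by rewrite eq_sym.
  by move: (none y); rewrite hy.
pose phi (P : F * F) := (P.1, P.2 == r P.1).
have inj : {in good_points f (hpoly lam) &, injective phi}.
  move=> [x1 y1] [x2 y2]; rewrite !inE /= => /and3P[e1 _ _] /and3P[e2 _ _] [ex eb].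
  subst x2.
  move: (hr _ _ e1) (hr _ _ e2) eb.
  case: (eqVneq y1 (r x1)) => [->|n1] /=.
    by move=> _ _ /esym/eqP ->.
  case: (eqVneq y2 (r x1)) => [->|n2] //= /eqP -> /eqP -> _ //.
rewrite -(card_in_imset inj).
apply: leq_trans (subset_leq_card (_ : _ \subset setX S [set: bool])) _.
  apply/subsetP => _ /imsetP [[x y] H ->]; rewrite in_setX inE.
  by move: H; rewrite !inE => /and3P[_ _ ->].
rewrite cardsX cardsT card_bool; lia.
Qed.

Theorem corollary4p5 (F : finFieldType) (g X T : nat) (f : {poly F}) (Jm : nat) :
  odd #|F| -> (0 < g)%N -> (0 < X)%N -> (0 < T)%N ->
  hyperelliptic_poly g f ->
  is_Jmax f g X T Jm ->
  (Jm%:Z <= (2 * (#|F|)%:Z - (X + T + 6 * g + 2)%:Z) %/ 4)%Z /\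
  rate Jm g X T <=
    ((2 * #|F|)%:R - (X + T + 8 * g + 2)%:R) / ((2 * #|F| + X + T + 4 * g + 2)%:R : rat).
Proof.
move=> _ _ _ _ _ [[lam [linj _ hc]] _].
have H := leq_trans hc (@count_good F f _ _ linj).
move: H; clear hc; move: #|F| => n H.
have H4 : (4 * Jm + (X + T + 6 * g + 2) <= 2 * n)%N by lia.
split; last exact: arith.
rewrite lez_divRL //.
have -> : (2 * n%:Z = (2 * n)%N%:Z)%R by rewrite PoszM.
rewrite subzn; last by lia.
rewrite -PoszM lez_nat; lia.
Qed.
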